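(* Every equilibrium $(S,I_1,I_2,I_{12},R)$ of the system below with all components nonnegative is of exactly one of the following types: (a) $(0,0,0,0,0)$; (b) $(0,0,0,0,R^{**})$ with $R^{**}=\frac{K}{b}(b-\mu_4')$; (c) $G_2=(S^{**},0,0,0,0)$; (d) $(S,I_1,0,0,R)$ with $S,I_1,R>0$; (e) $(S,0,I_2,0,R)$ with $S,I_2,R>0$; (f) $(S,I_1,I_2,I_{12},R)$ with all five components positive. In particular there is no nonnegative equilibrium with $S=0$ and $I_1+I_2+I_{12}>0$, no nonnegative equilibrium with $I_{12}>0$ and $I_1I_2=0$, and no nonnegative equilibrium with $I_1I_2>0$ and $I_{12}=0$.
   Context: Consider, for $t\ge0$, the system $S'=\big(b(1-\tfrac{N}{K})-\alpha_1I_1-\alpha_2I_2-(\beta_1+\beta_2+\alpha_3)I_{12}-\mu_0\big)S$, $I_1'=\big(b(1-\tfrac{N}{K})+\alpha_1S-\eta_1I_{12}-\gamma_1I_2-\mu_1\big)I_1+\beta_1SI_{12}$, $I_2'=\big(b(1-\tfrac{N}{K})+\alpha_2S-\eta_2I_{12}-\gamma_2I_1-\mu_2\big)I_2+\beta_2SI_{12}$, $I_{12}'=\big(b(1-\tfrac{N}{K})+\alpha_3S+\eta_1I_1+\eta_2I_2-\mu_3\big)I_{12}+(\gamma_1+\gamma_2)I_1I_2$, $R'=\big(b(1-\tfrac{N}{K})-\mu_4'\big)R+\rho_1I_1+\rho_2I_2+\rho_3I_{12}$, where $N=S+I_1+I_2+I_{12}+R$. All parameters $b,K,\alpha_i,\beta_i,\gamma_i,\eta_i,\rho_i,\mu_0,\mu_i'$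 are positive and $\mu_i=\rho_i+\mu_i'$ for $i=1,2,3$. Standing assumptions: $b>\mu_0$, $b>\mu_i$ ($i=1,2,3$), $b>\mu_4'$, and $\mu_0<\mu_4'<\mu_j'$ for $j=1,2,3$. Set $\sigma_k=(\mu_k-\mu_0)/\alpha_k$ ($k=1,2,3$), assumed to satisfy $\sigma_1<\sigma_2<\sigma_3$, and $S^{**}=\frac{K}{b}(b-\mu_0)$. An equilibrium is a point at which all five right-hand sides vanish. *)

(* Defs.v *)
From Stdlib Require Import Reals Lra.
Open Scope R_scope.

(* Parameters of the model. mu1p, mu2p, mu3p, mu4p are mu_1', ..., mu_4'. *)
Record params := Params {
  pb : R; pK : R;
  alpha1 : R; alpha2 : R; alpha3 : R;
  beta1 : R; beta2 : R;
  gamma1 : R; gamma2 : R;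
  eta1 : R; eta2 : R;
  rho1 : R; rho2 : R; rho3 : R;
  mu0 : R; mu1p : R; mu2p : R; mu3p : R; mu4p : R }.

Definition mu1 (p : params) : R := rho1 p + mu1p p.
Definition mu2 (p : params) : R := rho2 p + mu2p p.
Definition mu3 (p : params) : R := rho3 p + mu3p p.

Definition sigma1 (p : params) : R := (mu1 p - mu0 p) / alpha1 p.
Definition sigma2 (p : params) : R := (mu2 p - mu0 p) / alpha2 p.
Definition sigma3 (p : params) : R := (mu3 p - mu0 p) / alpha3 p.

Definition Sstarstar (p : params) : R := pK p / pb p * (pb p - mu0 p).
Definition Rstarstar (p : params) : R := pK p / pb p * (pb p - mu4p p).

Definition admissible (p : params) : Prop :=
  0 < pb p /\ 0 < pK p /\
  0 < alpha1 p /\ 0 < alpha2 p /\ 0 < alpha3 p /\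
  0 < beta1 p /\ 0 < beta2 p /\
  0 < gamma1 p /\ 0 < gamma2 p /\
  0 < eta1 p /\ 0 < eta2 p /\
  0 < rho1 p /\ 0 < rho2 p /\ 0 < rho3 p /\
  0 < mu0 p /\ 0 < mu1p p /\ 0 < mu2p p /\ 0 < mu3p p /\ 0 < mu4p p /\
  pb p > mu0 p /\ pb p > mu1 p /\ pb p > mu2 p /\ pb p > mu3 p /\
  pb p > mu4p p /\
  mu0 p < mu4p p /\ mu4p p < mu1p p /\ mu4p p < mu2p p /\ mu4p p < mu3p p /\
  sigma1 p < sigma2 p /\ sigma2 p < sigma3 p.

Definition logi (p : params) (S I1 I2 I12 Rr : R) : R :=
  pb p * (1 - (S + I1 + I2 + I12 + Rr) / pK p).

Definition fS (p : params) (S I1 I2 I12 Rr : R) : R :=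
  (logi p S I1 I2 I12 Rr - alpha1 p * I1 - alpha2 p * I2
   - (beta1 p + beta2 p + alpha3 p) * I12 - mu0 p) * S.

Definition fI1 (p : params) (S I1 I2 I12 Rr : R) : R :=
  (logi p S I1 I2 I12 Rr + alpha1 p * S - eta1 p * I12 - gamma1 p * I2
   - mu1 p) * I1 + beta1 p * S * I12.

Definition fI2 (p : params) (S I1 I2 I12 Rr : R) : R :=
  (logi p S I1 I2 I12 Rr + alpha2 p * S - eta2 p * I12 - gamma2 p * I1
   - mu2 p) * I2 + beta2 p * S * I12.

Definition fI12 (p : params) (S I1 I2 I12 Rr : R) : R :=
  (logi p S I1 I2 I12 Rr + alpha3 p * S + eta1 p * I1 + eta2 p * I2
   - mu3 p) * I12 + (gamma1 p + gamma2 p) * I1 * I2.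

Definition fR (p : params) (S I1 I2 I12 Rr : R) : R :=
  (logi p S I1 I2 I12 Rr - mu4p p) * Rr
  + rho1 p * I1 + rho2 p * I2 + rho3 p * I12.

Definition equilibrium (p : params) (S I1 I2 I12 Rr : R) : Prop :=
  fS p S I1 I2 I12 Rr = 0 /\ fI1 p S I1 I2 I12 Rr = 0 /\
  fI2 p S I1 I2 I12 Rr = 0 /\ fI12 p S I1 I2 I12 Rr = 0 /\
  fR p S I1 I2 I12 Rr = 0.

(* Main.v *)
Require Import Defs.
From Stdlib Require Import Reals Lra.
Open Scope R_scope.

Ltac pz x H := destruct (Rle_lt_or_eq_dec 0 x H).

Theorem mainTheorem4 (p : params) (S I1 I2 I12 Rr : R) :
  admissible p ->
  0 <= S -> 0 <= I1 -> 0 <= I2 -> 0 <= I12 -> 0 <= Rr ->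
  equilibrium p S I1 I2 I12 Rr ->
  ( (* (a) *) (S = 0 /\ I1 = 0 /\ I2 = 0 /\ I12 = 0 /\ Rr = 0)
  \/ (* (b) *) (S = 0 /\ I1 = 0 /\ I2 = 0 /\ I12 = 0 /\ Rr = Rstarstar p)
  \/ (* (c) *) (S = Sstarstar p /\ I1 = 0 /\ I2 = 0 /\ I12 = 0 /\ Rr = 0)
  \/ (* (d) *) (0 < S /\ 0 < I1 /\ I2 = 0 /\ I12 = 0 /\ 0 < Rr)
  \/ (* (e) *) (0 < S /\ I1 = 0 /\ 0 < I2 /\ I12 = 0 /\ 0 < Rr)
  \/ (* (f) *) (0 < S /\ 0 < I1 /\ 0 < I2 /\ 0 < I12 /\ 0 < Rr) )
  /\ ~ (S = 0 /\ I1 + I2 + I12 > 0)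
  /\ ~ (I12 > 0 /\ I1 * I2 = 0)
  /\ ~ (I1 * I2 > 0 /\ I12 = 0).
Proof.
intros Hadm HS H1 H2 H12 HR [ES [E1 [E2 [E3 ER]]]].
unfold fS, fI1, fI2, fI12, fR in *. unfold Rstarstar, Sstarstar.
remember (logi p S I1 I2 I12 Rr) as L eqn:HL. unfold logi in HL.
unfold mu1, mu2, mu3 in *.
destruct Hadm as (hb & hK & ha1 & ha2 & ha3 & hb1 & hb2 & hg1 & hg2 & he1 & he2
  & hr1 & hr2 & hr3 & hm0 & hm1 & hm2 & hm3 & hm4 & hbm0 & hbm1 & hbm2 & hbm3
  & hbm4 & h04 & h41 & h42 & h43 & _).
assert (P1 : 0 <= rho1 p * I1) by (apply Rmult_le_pos; lra).
assert (P2 : 0 <= rho2 p * I2) by (apply Rmult_le_pos; lra).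
assert (P3 : 0 <= rho3 p * I12) by (apply Rmult_le_pos; lra).
assert (NC : ~ (I1 * I2 > 0 /\ I12 = 0)).
{ intros [Hp H0]. subst I12.
  assert (0 < (gamma1 p + gamma2 p) * I1 * I2).
  { rewrite Rmult_assoc. apply Rmult_lt_0_compat; lra. }
  rewrite Rmult_0_r in E3. lra. }
assert (NA : ~ (S = 0 /\ I1 + I2 + I12 > 0)).
{ intros [HS0 Hpos]. subst S.
  assert (Lbig : L > mu4p p /\ rho1 p * I1 + rho2 p * I2 + rho3 p * I12 > 0).
  { pz I1 H1.
    - assert (h : (L + alpha1 p * 0 - eta1 p * I12 - gamma1 p * I2 - (rho1 p + mu1p p)) * I1 = 0) by lra.
      destruct (Rmult_integral _ _ h) as [h'|h']; [|lra].
      assert (0 <= eta1 p * I12) by (apply Rmult_le_pos; lra).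
      assert (0 <= gamma1 p * I2) by (apply Rmult_le_pos; lra).
      assert (0 < rho1 p * I1) by (apply Rmult_lt_0_compat; lra).
      split; lra.
    - subst I1. pz I2 H2.
      + assert (h : (L + alpha2 p * 0 - eta2 p * I12 - gamma2 p * 0 - (rho2 p + mu2p p)) * I2 = 0) by lra.
        destruct (Rmult_integral _ _ h) as [h'|h']; [|lra].
        assert (0 <= eta2 p * I12) by (apply Rmult_le_pos; lra).
        assert (0 < rho2 p * I2) by (apply Rmult_lt_0_compat; lra).
        split; lra.
      + subst I2.
        assert (h : (L + alpha3 p * 0 + eta1 p * 0 + eta2 p * 0 - (rho3 p + mu3p p)) * I12 = 0).
        { match type of E3 with ?a = 0 => transitivity a; [ring|exact E3] end. }
        destruct (Rmult_integral _ _ h) as [h'|h']; [|lra].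
        assert (0 < rho3 p * I12) by (apply Rmult_lt_0_compat; lra).
        split; lra. }
  destruct Lbig as [Lb Rp].
  assert (0 <= (L - mu4p p) * Rr) by (apply Rmult_le_pos; lra).
  lra. }
assert (NB : I12 > 0 -> 0 < S /\ 0 < I1 /\ 0 < I2).
{ intros Hp. pz S HS; [|exfalso; apply NA; split; [auto|lra]].
  assert (0 < beta1 p * S * I12).
  { apply Rmult_lt_0_compat; [apply Rmult_lt_0_compat|]; lra. }
  assert (0 < beta2 p * S * I12).
  { apply Rmult_lt_0_compat; [apply Rmult_lt_0_compat|]; lra. }
  split; [lra|split].
  - pz I1 H1; [lra|]. subst I1. rewrite Rmult_0_r in E1. lra.
  - pz I2 H2; [lra|]. subst I2. rewrite Rmult_0_r in E2. lra. }
split; [|split; [exact NA|split; [|exact NC]]].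
2:{ intros [Hp H0]. destruct (NB Hp) as (_ & a & b).
    assert (0 < I1 * I2) by (apply Rmult_lt_0_compat; lra). lra. }
pz S HS.
-
  destruct (Rmult_integral _ _ ES) as [hS|hS]; [|lra].
  pz I12 H12.
  + destruct (NB r0) as (_ & a & b).
    assert (0 < rho3 p * I12) by (apply Rmult_lt_0_compat; lra).
    right; right; right; right; right. repeat split; try lra.
    pz Rr HR; [lra|]. subst Rr. rewrite Rmult_0_r in ER. lra.
  + subst I12.
    assert (HI : I1 * I2 = 0).
    { destruct (Rle_lt_or_eq_dec 0 (I1*I2)) as [h|h]; [apply Rmult_le_pos; lra| |lra].
      exfalso; apply NC; split; lra. }
    pz I1 H1.
    * assert (I2 = 0).
      { destruct (Rmult_integral _ _ HI); lra. }
      subst I2.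
      assert (0 < rho1 p * I1) by (apply Rmult_lt_0_compat; lra).
      right; right; right; left. repeat split; try lra.
      pz Rr HR; [lra|]. subst Rr. rewrite Rmult_0_r in ER. lra.
    * subst I1. pz I2 H2.
      -- assert (0 < rho2 p * I2) by (apply Rmult_lt_0_compat; lra).
         right; right; right; right; left. repeat split; try lra.
         pz Rr HR; [lra|]. subst Rr. rewrite Rmult_0_r in ER. lra.
      -- subst I2. right; right; left.
         assert (hL : L = mu0 p).
         { rewrite !Rmult_0_r in hS. lra. }
         assert (Rr = 0).
         { assert (h : (L - mu4p p) * Rr = 0).
           { rewrite !Rmult_0_r in ER. lra. }
           destruct (Rmult_integral _ _ h); lra. }
         subst Rr. repeat split; try lra.
         replace (S + 0 + 0 + 0 + 0) with S in HL by ring.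
         set (t := S / pK p) in *.
         replace S with (pK p * t) by (unfold t; field; lra).
         replace (mu0 p) with (pb p * (1 - t)) by lra.
         field; lra.
- subst S.
  assert (I1 = 0 /\ I2 = 0 /\ I12 = 0) as (-> & -> & ->).
  { destruct (Rle_lt_or_eq_dec 0 (I1 + I2 + I12)) as [h|h]; [lra| |lra].
    exfalso; apply NA; split; lra. }
  assert (h : (L - mu4p p) * Rr = 0).
  { rewrite !Rmult_0_r in ER. lra. }
  destruct (Rmult_integral _ _ h) as [h'|h']; [|left; repeat split; lra].
  right; left. repeat split; try lra.
  replace (0 + 0 + 0 + 0 + Rr) with Rr in HL by ring.
  set (t := Rr / pK p) in *.
  replace Rr with (pK p * t) by (unfold t; field; lra).
  replace (mu4p p) with (pb p * (1 - t)) by lra.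
  field; lra.
Qed.
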